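(* Let $\lambda\in(0,1]$, $p$ a polynomial of degree $d\ge1$ with nonnegative real roots and largest root $R$. Then the function $\mathcal H(x)=\mathcal G(x)\big(\lambda\mathcal G(x)+\frac{1-\lambda}{x}\big)$, with $\mathcal G(x)=\frac1d\frac{xp'(x^2)}{p(x^2)}$, is a bijection from $(\sqrt R,+\infty)$ onto $(0,+\infty)$.
   Context: $\mathcal G$ is the Cauchy transform $\int\frac{d\mu(t)}{x-t}$ of the uniform measure $\mu$ on the $2d$ roots of $p(x^2)$, and $\mathcal H$ is the $\lambda$-rectangular Cauchy transform of $p(x^2)$. *)

(* Defs.v *)
From HB Require Import structures.
From mathcomp Require Import all_boot all_order all_algebra.
From mathcomp Require Import reals.
Set Implicit Arguments. Unset Strict Implicit. Unset Printing Implicit Defensive.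
Import Order.TTheory GRing.Theory Num.Theory.
Local Open Scope ring_scope.

Definition pdeg (R : nzRingType) (p : {poly R}) : nat := (size p).-1.

(* Cauchy transform of the uniform measure on the 2d roots of p(x^2):
   G(x) = (1/d) * x p'(x^2) / p(x^2). *)
Definition cauchyG (R : realType) (p : {poly R}) (x : R) : R :=
  (x * (p^`()).[x ^+ 2]) / ((pdeg p)%:R * p.[x ^+ 2]).

Definition cauchyH (R : realType) (lam : R) (p : {poly R}) (x : R) : R :=
  cauchyG p x * (lam * cauchyG p x + (1 - lam) / x).

(* Main.v *)
Require Import Defs.
From HB Require Import structures.
From mathcomp Require Import all_boot all_order all_algebra.
From mathcomp Require Import reals.
From mathcomp Require Import ring lra.
Import Order.TTheory GRing.Theory Num.Theory.
Local Open Scope ring_scope.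

Section Aux.
Variable R : realType.

Lemma deriv_prodX (s : seq R) t : (forall r, r \in s -> t != r) ->
  (\prod_(r <- s) ('X - r%:P))^`().[t] =
  (\prod_(r <- s) ('X - r%:P)).[t] * \sum_(r <- s) (t - r)^-1.
Proof.
elim: s => [|a s IH] H.
  by rewrite !big_nil -polyC1 derivC hornerC mulr0 horner0.
rewrite !big_cons derivM derivXsubC mul1r hornerD !hornerM hornerXsubC IH.
  have ta : t - a != 0 by rewrite subr_eq0 H // mem_head.
  by field.
by move=> r rs; apply: H; rewrite inE rs orbT.
Qed.

Lemma sum_const_seq (s : seq R) (C : R) : \sum_(r <- s) C = (size s)%:R * C.
Proof.
elim: s => [|a s IH]; first by rewrite big_nil mul0r.
by rewrite big_cons IH /= -add1n natrD mulrDl mul1r.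
Qed.

Lemma G_sum (p : {poly R}) c (s : seq R) x : c != 0 -> (0 < size s)%N ->
  p = c *: \prod_(r <- s) ('X - r%:P) -> (forall r, r \in s -> r < x ^+ 2) ->
  cauchyG p x = (\sum_(r <- s) x / (x ^+ 2 - r)) / (size s)%:R.
Proof.
move=> c0 sz pE Hs.
have q0 : (\prod_(r <- s) ('X - r%:P)).[x ^+ 2] != 0.
  apply/negP => /eqP H0.
  have : root (\prod_(r <- s) ('X - r%:P)) (x ^+ 2) by rewrite /root H0.
  by rewrite root_prod_XsubC => /Hs; rewrite ltxx.
have d0 : (size s)%:R != 0 :> R by rewrite pnatr_eq0 -lt0n.
rewrite /cauchyG /pdeg pE size_scale // size_prod_XsubC /= derivZ !hornerZ.
rewrite deriv_prodX; last by move=> r /Hs; rewrite lt_def eq_sym => /andP[].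
rewrite -mulr_sumr.
set Q := (\prod_(r <- s) _).[_] in q0 *.
set S := \sum_(r <- s) _.
set d := (size s)%:R in d0 *.
by field; apply/and3P.
Qed.

Lemma term_mono (x y r : R) : 0 < x -> x < y -> 0 <= r -> r < x ^+ 2 ->
  y / (y ^+ 2 - r) < x / (x ^+ 2 - r).
Proof.
move=> x0 xy r0 rx.
have ry : r < y ^+ 2.
  apply: lt_trans rx _; rewrite !expr2; apply: ltr_pM => //; exact: ltW.
have h1 : 0 < x ^+ 2 - r by rewrite subr_gt0.
have h2 : 0 < y ^+ 2 - r by rewrite subr_gt0.
rewrite ltr_pdivrMr // mulrAC ltr_pdivlMr //.
have : 0 < (y - x) * (x * y + r).
  apply: mulr_gt0; first by rewrite subr_gt0.
  apply: ltr_wpDr => //; apply: mulr_gt0 => //; exact: lt_trans xy.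
lra.
Qed.

Lemma term_le (x r m : R) : 0 < x -> r <= m -> m < x ^+ 2 ->
  x / (x ^+ 2 - r) <= x / (x ^+ 2 - m).
Proof.
move=> x0 rm mx.
have h1 : 0 < x ^+ 2 - m by rewrite subr_gt0.
have h2 : 0 < x ^+ 2 - r by rewrite subr_gt0; apply: le_lt_trans mx.
rewrite ler_pM2l // lef_pV2 ?posrE //; lra.
Qed.

End Aux.

Theorem mainTheorem16 (R : realType) (lam : R) (p : {poly R}) (c : R)
    (s : seq R) (rmax : R) :
  0 < lam -> lam <= 1 ->
  (1 <= pdeg p)%N ->
  (* p has only real, nonnegative roots: p = c * prod_(r in s) (X - r) *)
  p = c *: \prod_(r <- s) ('X - r%:P) ->
  (forall r, r \in s -> 0 <= r) ->
  (* rmax is the largest root of p *)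
  root p rmax -> (forall r, root p r -> r <= rmax) ->
  (* H is a bijection from (sqrt rmax, +oo) onto (0, +oo) *)
  [/\ (forall x, Num.sqrt rmax < x -> 0 < cauchyH lam p x),
      (forall x y, Num.sqrt rmax < x -> Num.sqrt rmax < y ->
          cauchyH lam p x = cauchyH lam p y -> x = y) &
      (forall y, 0 < y -> exists x, Num.sqrt rmax < x /\ cauchyH lam p x = y)].
Proof.
move=> l0 l1 dp pE s0 rroot rmaxP.
have c0 : c != 0.
  by apply/negP=> /eqP c0; move: dp; rewrite pE c0 scale0r /pdeg size_poly0.
have ds : pdeg p = size s by rewrite /pdeg pE size_scale // size_prod_XsubC.
have sz : (0 < size s)%N by rewrite -ds.
have rootE' r : root p r = (r \in s) by rewrite pE rootZ // root_prod_XsubC.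
have rin : rmax \in s by rewrite -rootE'.
have sle r : r \in s -> r <= rmax by move=> rs; apply: rmaxP; rewrite rootE'.
have rmax0 : 0 <= rmax by apply: s0.
set d : R := (size s)%:R.
have d1 : 1 <= d by rewrite ler1n.
have d0 : 0 < d by apply: lt_le_trans d1.
have key x : Num.sqrt rmax < x -> 0 < x /\ rmax < x ^+ 2.
  move=> hx; have x0 : 0 < x := le_lt_trans (sqrtr_ge0 _) hx.
  split => //; rewrite -{1}(sqr_sqrtr rmax0) !expr2.
  by apply: ltr_pM => //; exact: sqrtr_ge0.
have rlt x r : Num.sqrt rmax < x -> r \in s -> r < x ^+ 2.
  by move=> hx rs; exact: le_lt_trans (sle r rs) (key x hx).2.
pose T := fun x => \sum_(r <- s) x / (x ^+ 2 - r).
have Gx x : Num.sqrt rmax < x -> cauchyG p x = T x / d.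
  by move=> hx; exact: G_sum c0 sz pE (fun r => rlt x r hx).
have Tlow x : Num.sqrt rmax < x -> x / (x ^+ 2 - rmax) <= T x.
  move=> hx; have [x0 xr] := key x hx.
  rewrite /T (big_rem _ rin) /= lerDl big_seq; apply: sumr_ge0 => r /mem_rem rs.
  by apply: divr_ge0; [exact: ltW | rewrite subr_ge0 ltW // rlt].
have Tup x : Num.sqrt rmax < x -> T x <= d * (x / (x ^+ 2 - rmax)).
  move=> hx; have [x0 xr] := key x hx.
  rewrite /d -sum_const_seq /T big_seq [X in _ <= X]big_seq.
  by apply: ler_sum => r rs; apply: term_le => //; apply: sle.
have Tmono x y : Num.sqrt rmax < x -> x < y -> T y < T x.
  move=> hx xy; have [x0 xr] := key x hx.
  rewrite /T (big_rem _ rin) [X in _ < X](big_rem _ rin) /=.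
  apply: ltr_leD; first exact: term_mono.
  rewrite big_seq [X in _ <= X]big_seq; apply: ler_sum => r /mem_rem rs.
  by apply: ltW; apply: term_mono => //; [apply: s0 | apply: rlt].
have gpos x : Num.sqrt rmax < x -> 0 < cauchyG p x.
  move=> hx; have [x0 xr] := key x hx.
  rewrite Gx // divr_gt0 //; apply: lt_le_trans (Tlow x hx).
  by apply: divr_gt0 => //; rewrite subr_gt0.
have Hpos x : Num.sqrt rmax < x -> 0 < cauchyH lam p x.
  move=> hx; have [x0 xr] := key x hx.
  rewrite /cauchyH; apply: mulr_gt0; first exact: gpos.
  have : 0 < lam * cauchyG p x by apply: mulr_gt0 => //; exact: gpos.
  have : 0 <= (1 - lam) / x by apply: divr_ge0; [rewrite subr_ge0 | exact: ltW].
  lra.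
have Hmono x y : Num.sqrt rmax < x -> x < y -> cauchyH lam p y < cauchyH lam p x.
  move=> hx xy; have [x0 xr] := key x hx.
  have hy : Num.sqrt rmax < y by apply: lt_trans xy.
  have y0 : 0 < y by apply: lt_trans xy.
  have gyx : cauchyG p y < cauchyG p x.
    by rewrite !Gx // ltr_pM2r ?invr_gt0 //; apply: Tmono.
  have iyx : y^-1 < x^-1 by rewrite ltf_pV2 ?posrE.
  have P1 : lam * cauchyG p y < lam * cauchyG p x by rewrite ltr_pM2l.
  have P2 : (1 - lam) * y^-1 <= (1 - lam) * x^-1.
    by apply: ler_wpM2l; [rewrite subr_ge0 | exact: ltW].
  rewrite /cauchyH; apply: ltr_pM.
  - exact: ltW (gpos y hy).
  - apply: addr_ge0; first by apply: mulr_ge0; [exact: ltW | exact: ltW (gpos y hy)].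
    by apply: divr_ge0; [rewrite subr_ge0 | exact: ltW].
  - exact: gyx.
  - lra.
split => //.
  move=> x y hx hy Hxy; case: (ltgtP x y) => // xy.
    by have := Hmono x y hx xy; rewrite Hxy ltxx.
  by have := Hmono y x hy xy; rewrite Hxy ltxx.
move=> y y0.
have pnz x : Num.sqrt rmax < x -> p.[x ^+ 2] != 0.
  move=> hx; apply/negP => /eqP h.
  have : root p (x ^+ 2) by apply/rootP.
  by move/rmaxP; rewrite leNgt (key x hx).2.
pose e := lam / (2 * d ^+ 2 * y).
have e0 : 0 < e by apply: divr_gt0 => //; apply: mulr_gt0 => //; apply: mulr_gt0 => //; apply: exprn_gt0.
have eE : e * (2 * d ^+ 2 * y) = lam.
  rewrite /e; field; apply/andP; split; apply: lt0r_neq0 => //.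
pose a := Num.sqrt (rmax + e).
have ha : Num.sqrt rmax < a by rewrite ltr_sqrt ?ltrDl //; apply: ltr_wpDl.
have a2 : a ^+ 2 = rmax + e by rewrite sqr_sqrtr // addr_ge0 // ltW.
have [a0 ar] := key a ha.
have Ha : y < cauchyH lam p a.
  set g := cauchyG p a.
  have g0 : 0 < g := gpos a ha.
  have h1 : a / (a ^+ 2 - rmax) <= d * g by rewrite /g Gx // mulrCA mulfV ?mulr1 ?lt0r_neq0 //; apply: Tlow.
  have ae : a ^+ 2 - rmax = e by rewrite a2; ring.
  rewrite ae ler_pdivrMr // in h1.
  have h2 : a * a <= (d * g * e) * (d * g * e) by apply: ler_pM => //; exact: ltW.
  rewrite -expr2 a2 in h2.
  have h3 : e * 1 <= e * (d ^+ 2 * e * g ^+ 2).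
    have : 0 <= rmax := rmax0. move: h2. rewrite !expr2. lra.
  rewrite ler_pM2l // in h3.
  have h4 : 0 <= g * ((1 - lam) / a) by apply: mulr_ge0; [exact: ltW | apply: divr_ge0; [rewrite subr_ge0 | exact: ltW]].
  have h5 : y * 1 <= y * (d ^+ 2 * e * g ^+ 2) by rewrite ler_pM2l.
  rewrite /cauchyH -/g.
  move: eE h4 h5. rewrite !expr2. nra.
pose b := Num.sqrt (2 * rmax + 4 / y + e + 1).
have y4 : 0 < 4 / y by apply: divr_gt0.
have hbpos : 0 <= 2 * rmax + 4 / y + e + 1.
  have := ltW y4; have := ltW e0; lra.
have hb : Num.sqrt rmax < b.
  rewrite ltr_sqrt; last by have := ltW y4; have := ltW e0; lra.
  have := ltW y4; have := ltW e0; lra.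
have b2 : b ^+ 2 = 2 * rmax + 4 / y + e + 1 by rewrite sqr_sqrtr.
have [b0 br] := key b hb.
have Hb : cauchyH lam p b < y.
  set g := cauchyG p b.
  have g0 : 0 < g := gpos b hb.
  have h1 : d * g <= d * (b / (b ^+ 2 - rmax)) by rewrite /g Gx // mulrCA mulfV ?mulr1 ?lt0r_neq0 //; apply: Tup.
  rewrite ler_pM2l // ler_pdivlMr ?subr_gt0 // in h1.
  have h2 : 0 <= g * (b ^+ 2 - 2 * rmax).
    apply: mulr_ge0; first exact: ltW.
    rewrite b2; have := ltW y4; have := ltW e0; lra.
  have h3 : g * b * b <= 2 * b by move: h1 h2; rewrite !expr2; lra.
  rewrite ler_pM2r // in h3.
  set u := g * b in h3.
  have Hu : cauchyH lam p b * b ^+ 2 = u * (lam * u + (1 - lam)).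
    rewrite /cauchyH -/g /u; field; exact: lt0r_neq0.
  have h4 : lam * u <= lam * 2 by rewrite ler_pM2l.
  have h5 : u * (lam * u + (1 - lam)) <= 2 * (lam * u + (1 - lam)).
    by rewrite ler_pM2r //; have := mulr_gt0 l0 (mulr_gt0 g0 b0); rewrite -/u; lra.
  have h6 : y * (4 / y) = 4 by field; exact: lt0r_neq0.
  have h7 : cauchyH lam p b * b ^+ 2 < y * b ^+ 2.
    rewrite Hu b2; have := mulr_ge0 (ltW y0) (ltW e0); have := mulr_ge0 (ltW y0) rmax0.
    lra.
  by rewrite ltr_pM2r ?exprn_gt0 in h7.
pose P2 := p \Po 'X^2.
pose P2' := p^`() \Po 'X^2.
pose Q := (y * d ^+ 2) *: (P2 ^+ 2) - lam *: ('X^2 * P2' ^+ 2)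
          - ((1 - lam) * d) *: (P2' * P2).
have Qx x : Num.sqrt rmax < x ->
    Q.[x] = d ^+ 2 * p.[x ^+ 2] ^+ 2 * (y - cauchyH lam p x).
  move=> hx; have [x0 xr] := key x hx; have px := pnz x hx.
  rewrite /Q /P2 /P2' !(hornerD, hornerN, hornerZ, hornerM, horner_exp, hornerXn, horner_comp, hornerX) -!expr2 /cauchyH /cauchyG ds -/d.
  by field; rewrite px (lt0r_neq0 x0) (lt0r_neq0 d0).
have ab : a <= b.
  rewrite ler_sqrt //; have := ltW y4; lra.
have Qa : Q.[a] <= 0.
  rewrite Qx //; apply: mulr_ge0_le0; first by apply: mulr_ge0; [apply: exprn_ge0; exact: ltW | exact: sqr_ge0].
  by rewrite subr_le0 ltW.
have Qb : 0 <= Q.[b].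
  rewrite Qx //; apply: mulr_ge0; first by apply: mulr_ge0; [apply: exprn_ge0; exact: ltW | exact: sqr_ge0].
  by rewrite subr_ge0 ltW.
have [z /andP[az zb] rz] := @poly_ivt R Q a b ab (introT andP (conj Qa Qb)).
have hz : Num.sqrt rmax < z by apply: lt_le_trans az.
exists z; split => //.
move/rootP: rz; rewrite Qx //; move/eqP; rewrite mulf_eq0 subr_eq0 => /orP[|/eqP //].
by rewrite mulf_eq0 !expf_eq0 /= (negbTE (pnz z hz)) (negbTE (lt0r_neq0 d0)).
Qed.
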